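(* Let $J\in\mathbb N$ be fixed, and for $j=1,\dots,J$ let $U_j,\hat U_j$ be orthogonal projection matrices of the same rank $K_j$ (of a common dimension). For $0\le\alpha_N<1/(4\sqrt2+2)$ define maps on chains $V=(V_1,\dots,V_J)$ of projectors by $$[\hat{\mathcal G}_{\alpha_N}(V)]_1=\Pi_{K_1}(\hat U_1+\alpha_NV_2),\quad [\hat{\mathcal G}_{\alpha_N}(V)]_j=\Pi_{K_j}(\alpha_NV_{j-1}+\hat U_j+\alpha_NV_{j+1})\ (2\le j\le J-1),\quad [\hat{\mathcal G}_{\alpha_N}(V)]_J=\Pi_{K_J}(\alpha_NV_{J-1}+\hat U_J),$$ and $\mathcal G_{\alpha_N}$ analogously with $\hat U_j$ replaced by $U_j$. Let $(\bar U_j)_j$ be the fixed point of $\hat{\mathcal G}_{\alpha_N}$ and $(U_j^{(\alpha_N)})_j$ the fixed point of $\mathcal G_{\alpha_N}$. Then there is a constant $C>0$, independent of $N$, such that $$\sum_{j=1}^J\|\bar U_j-U_j\|_F\le C\Bigl(\sum_{j=1}^J\|\hat U_j-U_j\|_F+\alpha_N\Bigr).$$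
   Context: $\Pi_K(M)=\sum_{k=1}^K\nu_k\nu_k'$ denotes the orthogonal projector onto the span of the top-$K$ eigenvectors $\nu_1,\dots,\nu_K$ of a symmetric matrix $M$. $\alpha_N$ is a smoothing parameter (possibly depending on a sample size $N$). *)

(* Defs.v *)
From HB Require Import structures.
From mathcomp Require Import all_boot all_order all_algebra.
From mathcomp Require Import reals.
Set Implicit Arguments. Unset Strict Implicit. Unset Printing Implicit Defensive.
Import Order.TTheory GRing.Theory Num.Theory.
Local Open Scope ring_scope.

Section Defs.
Variable R : realType.

Definition orth_proj (d : nat) (P : 'M[R]_d) : Prop :=
  P^T = P /\ P *m P = P.

Definition frob (m n : nat) (A : 'M[R]_(m, n)) : R :=
  Num.sqrt (\sum_(i < m) \sum_(j < n) A i j ^+ 2).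

(* P is Pi_K(M) = sum_{k<=K} nu_k nu_k' for an orthonormal eigenbasis
   nu_1..nu_d of M (columns of Q) ordered by nonincreasing eigenvalues. *)
Definition is_PiK (d K : nat) (M P : 'M[R]_d) : Prop :=
  exists (Q : 'M[R]_d) (lam : 'rV[R]_d),
    Q^T *m Q = 1%:M /\
    (forall i j : 'I_d, (i <= j)%N -> lam 0 j <= lam 0 i) /\
    M = Q *m diag_mx lam *m Q^T /\
    P = \sum_(k < d | (k < K)%N) col k Q *m (col k Q)^T.

Definition chain_at (d J : nat) (V : nat -> 'M[R]_d) (j : nat) : 'M[R]_d :=
  if (1 <= j <= J)%N then V j else 0.

(* V is a fixed point of the map G_alpha built from the chain W:
   V_j = Pi_{K_j}(alpha V_{j-1} + W_j + alpha V_{j+1}), with V_0 = V_{J+1} = 0 *)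
Definition is_fixed_point (d J : nat) (K : nat -> nat) (alpha : R)
    (W V : nat -> 'M[R]_d) : Prop :=
  forall j : nat, (1 <= j <= J)%N ->
    is_PiK (K j) (alpha *: chain_at J V j.-1 + W j + alpha *: chain_at J V j.+1)
      (V j).

End Defs.

(* Main.v *)
Require Import Defs.
From HB Require Import structures.
From mathcomp Require Import all_boot all_order all_algebra.
From mathcomp Require Import reals zify ring lra.
Import Order.TTheory GRing.Theory Num.Theory.
Local Open Scope ring_scope.
Set Implicit Arguments. Unset Strict Implicit. Unset Printing Implicit Defensive.

Section S.
Variable R : realType.

Lemma sum_ind_lt (n r : nat) : (r <= n)%N ->
  \sum_(i < n) ((i < r)%N%:R : R) = r%:R.
Proof.
move=> hrn; rewrite (eq_bigr (fun i : 'I_n => if (i < r)%N then (1:R) else 0)); last by move=> i _; case: ifP.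
rewrite -big_mkcond /= -(big_ord_widen n (fun _ => (1:R)) hrn).
by rewrite sumr_const card_ord.
Qed.

Lemma tr_pid (n r : nat) : (r <= n)%N -> \tr (pid_mx r : 'M[R]_n) = r%:R.
Proof.
move=> hrn; rewrite /mxtrace -(@sum_ind_lt n r hrn); apply: eq_bigr => i _.
by rewrite mxE eqxx.
Qed.

Lemma tr_idem_rank d (A : 'M[R]_d) : A *m A = A -> \tr A = (\rank A)%:R.
Proof.
move=> hA.
set L := col_ebase A; set Rb := row_ebase A; set Pi : 'M[R]_d := pid_mx (\rank A).
have eA : A = L *m Pi *m Rb by rewrite mulmx_ebase.
have uL : L \in unitmx by apply: col_ebase_unit.
have uR : Rb \in unitmx by apply: row_ebase_unit.
have hP : Pi *m Pi = Pi by rewrite /Pi pid_mx_id // rank_leq_row.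
have key : Pi *m (Rb *m L) *m Pi = Pi.
  move: (congr1 (fun X => invmx L *m X *m invmx Rb) hA).
  rewrite /= {1 2 3}eA.
  by rewrite !mulmxA !mulVmx // !mul1mx !mulmxK.
rewrite {1}eA -mulmxA mxtrace_mulC -mulmxA.
have -> : Pi *m (Rb *m L) = Pi *m (Pi *m (Rb *m L)) by rewrite mulmxA hP.
by rewrite mxtrace_mulC key /Pi tr_pid ?rank_leq_row.
Qed.

Definition inner d (A B : 'M[R]_d) := \sum_(i < d) \sum_(j < d) A i j * B i j.

Lemma inner_tr d (A B : 'M[R]_d) : inner A B = \tr (A^T *m B).
Proof.
rewrite /inner /mxtrace exchange_big; apply: eq_bigr => j _.
by rewrite mxE; apply: eq_bigr => i _; rewrite mxE.
Qed.

Lemma ssq_inner d (A : 'M[R]_d) :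
  \sum_(i < d) \sum_(j < d) A i j ^+ 2 = inner A A.
Proof. by apply: eq_bigr => i _; apply: eq_bigr => j _; rewrite expr2. Qed.

Lemma PiK_facts d K (M P : 'M[R]_d) : is_PiK K M P ->
  exists (Q : 'M[R]_d) (lam : 'rV[R]_d),
    Q^T *m Q = 1%:M /\ Q *m Q^T = 1%:M /\
    (forall i j : 'I_d, (i <= j)%N -> lam 0 j <= lam 0 i) /\
    M = Q *m diag_mx lam *m Q^T /\
    P = Q *m diag_mx (\row_(k < d) ((k < K)%N%:R : R)) *m Q^T.
Proof.
move=> [Q [lam [hQ [hl [hM hP]]]]]; exists Q, lam.
split=> //; split; first by apply: mulmx1C.
split=> //; split=> //; rewrite hP; apply/matrixP => i j.
rewrite summxE mul_mx_diag !mxE big_mkcond /=; apply: eq_bigr => k _.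
rewrite !mxE big_ord1 !mxE.
by case: ifP => _; rewrite ?mulr1 ?mulr0 ?mul0r.
Qed.

Lemma rearr d K (w lam : 'I_d -> R) : (K <= d)%N ->
  (forall k, 0 <= w k <= 1) -> \sum_(k < d) w k = K%:R ->
  (forall i j : 'I_d, (i <= j)%N -> lam j <= lam i) ->
  \sum_(k < d) w k * lam k <= \sum_(k < d) (k < K)%N%:R * lam k.
Proof.
move=> hK hw hs hl.
case: d hK w lam hw hs hl => [|d'] hK w lam hw hs hl.
  by rewrite !big_ord0.
set m := lam (inord K.-1).
have hm : forall k : 'I_d'.+1, ((k < K)%N%:R - w k) * m <= ((k < K)%N%:R - w k) * lam k.
  move=> k; have /andP [w0 w1] := hw k.
  have iv : (inord K.-1 : 'I_d'.+1) = K.-1 :> nat by rewrite inordK //; lia.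
  case: ltnP => hk.
    apply: ler_wpM2l; first by rewrite subr_ge0.
    by apply: hl; rewrite iv; lia.
  rewrite mulr0n !sub0r !mulNr lerN2; apply: ler_wpM2l => //.
  apply: hl; rewrite iv; lia.
have : \sum_(k < d'.+1) ((k < K)%N%:R - w k) * m <= \sum_(k < d'.+1) ((k < K)%N%:R - w k) * lam k.
  by apply: ler_sum => k _; apply: hm.
rewrite -mulr_suml sumrB hs sum_ind_lt // subrr mul0r.
rewrite (eq_bigr (fun k : 'I_d'.+1 => (k < K)%N%:R * lam k - w k * lam k)); last by move=> k _; rewrite mulrBl.
by rewrite sumrB subr_ge0.
Qed.

Lemma dk d K (U M P : 'M[R]_d) : U^T = U -> U *m U = U -> \tr U = K%:R ->
  (K <= d)%N -> is_PiK K M P ->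
  inner (P - U) (P - U) <= 4 * inner (M - U) (M - U).
Proof.
move=> hUT hUU trU hK hPi.
have [Q [lam [hQ1 [hQ2 [hl [hM hP]]]]]] := PiK_facts hPi.
set D := \row_(k < d) ((k < K)%N%:R : R) in hP.
have trQ : forall X, \tr (Q *m X *m Q^T) = \tr X.
  by move=> X; rewrite mxtrace_mulC mulmxA hQ1 mul1mx.
have PT : P^T = P by rewrite hP !trmx_mul trmxK tr_diag_mx mulmxA.
have PP : P *m P = P.
  rewrite hP !mulmxA -(mulmxA (Q *m diag_mx D) Q^T Q) hQ1 mulmx1.
  rewrite -(mulmxA Q) mulmx_diag; congr (_ *m diag_mx _ *m _).
  by apply/rowP => k; rewrite !mxE; case: (k < K)%N; rewrite ?mulr1 ?mulr0.
have trP : \tr P = K%:R.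
  rewrite hP trQ mxtrace_diag -(sum_ind_lt hK); apply: eq_bigr => k _.
  by rewrite mxE.
set W := Q^T *m U *m Q.
have WT : W^T = W by rewrite /W !trmx_mul trmxK hUT mulmxA.
have WW : W *m W = W.
  rewrite /W !mulmxA -(mulmxA (Q^T *m U) Q Q^T) hQ2 mulmx1.
  by rewrite -(mulmxA Q^T U U) hUU.
have hw : forall k, 0 <= W k k <= 1.
  move=> k.
  have e : W k k = \sum_i W i k ^+ 2.
    rewrite -{1}WW mxE; apply: eq_bigr => i _.
    by rewrite -{1}WT mxE expr2.
  have w0 : 0 <= W k k by rewrite e; apply: sumr_ge0 => i _; apply: sqr_ge0.
  have w1 : W k k ^+ 2 <= W k k.
    rewrite {2}e (bigD1 k) //= lerDl; apply: sumr_ge0 => i _; apply: sqr_ge0.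
  rewrite w0 /=; nra.
have sw : \sum_k W k k = K%:R.
  by rewrite -trU -/(mxtrace W) /W mxtrace_mulC mulmxA hQ2 mul1mx.
have Delta : \tr (U *m M) <= \tr (P *m M).
  have -> : P *m M = Q *m (diag_mx D *m diag_mx lam) *m Q^T.
    by rewrite hP hM !mulmxA -(mulmxA (Q *m diag_mx D) Q^T Q) hQ1 mulmx1.
  rewrite trQ mulmx_diag mxtrace_diag.
  rewrite hM mulmxA mxtrace_mulC !mulmxA -/W. rewrite mul_mx_diag /mxtrace.
  under eq_bigr do rewrite mxE.
  under [X in _ <= X]eq_bigr do rewrite !mxE.
  by apply: rearr => // i j /hl.
set S := P - U; set E := M - U.
have ST : S^T = S by rewrite /S linearB /= PT hUT.
have eSS : inner S S = \tr P - 2 * \tr (P *m U) + \tr U.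
  rewrite inner_tr ST /S mulmxBl !mulmxBr !raddfB /= PP hUU.
  rewrite (mxtrace_mulC U P); lra.
have eSE : inner S E = \tr (P *m M) - \tr (P *m U) - \tr (U *m M) + \tr U.
  rewrite inner_tr ST /S /E mulmxBl !mulmxBr !raddfB /= hUU; lra.
have h1 : inner S S <= 2 * inner S E by rewrite eSS eSE trP trU; lra.
have h2 : 2 * inner S E <= inner S S / 2 + 2 * inner E E.
  rewrite /inner !mulr_sumr mulr_suml -big_split /=; apply: ler_sum => i _.
  rewrite !mulr_sumr mulr_suml -big_split /=; apply: ler_sum => j _.
  have := sqr_ge0 (S i j - 2 * E i j); nra.
lra.
Qed.

Lemma sqrt_le_of (x y : R) : 0 <= y -> x <= y ^+ 2 -> Num.sqrt x <= y.
Proof.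
move=> y0 hx; apply: le_trans (ler_wsqrtr hx) _.
by rewrite sqrtr_sqr ger0_norm.
Qed.

Lemma inner_ge0 d (A : 'M[R]_d) : 0 <= inner A A.
Proof. by apply: sumr_ge0 => i _; apply: sumr_ge0 => j _; rewrite -expr2; apply: sqr_ge0. Qed.

Lemma frobE d (A : 'M[R]_d) : frob A = Num.sqrt (inner A A).
Proof. by rewrite /frob ssq_inner. Qed.

Lemma frob3 d (A B C : 'M[R]_d) :
  frob (A + B + C) <= 2 * (frob A + frob B + frob C).
Proof.
rewrite !frobE; apply: sqrt_le_of.
  by rewrite mulr_ge0 // !addr_ge0 // sqrtr_ge0.
have h1 : inner (A + B + C) (A + B + C) <= 4 * (inner A A + inner B B + inner C C).
  rewrite /inner -!big_split /= mulr_sumr; apply: ler_sum => i _.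
  rewrite -!big_split /= mulr_sumr; apply: ler_sum => j _.
  rewrite !mxE.
  have := sqr_ge0 (A i j - B i j); have := sqr_ge0 (A i j - C i j);
  have := sqr_ge0 (B i j - C i j); nra.
have := inner_ge0 A; have := inner_ge0 B; have := inner_ge0 C.
have := sqr_sqrtr (inner_ge0 A); have := sqr_sqrtr (inner_ge0 B);
have := sqr_sqrtr (inner_ge0 C).
have := sqrtr_ge0 (inner A A); have := sqrtr_ge0 (inner B B);
have := sqrtr_ge0 (inner C C).
move: h1; set a := Num.sqrt (inner A A); set b := Num.sqrt (inner B B);
set c := Num.sqrt (inner C C); nra.
Qed.

Lemma PiK_inner d K (M P : 'M[R]_d) : is_PiK K M P -> inner P P <= d%:R.
Proof.
move=> hPi; have [Q [lam [hQ1 [hQ2 [hl [hM hP]]]]]] := PiK_facts hPi.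
set D := \row_(k < d) ((k < K)%N%:R : R) in hP.
have PT : P^T = P by rewrite hP !trmx_mul trmxK tr_diag_mx mulmxA.
have PP : P *m P = P.
  rewrite hP !mulmxA -(mulmxA (Q *m diag_mx D) Q^T Q) hQ1 mulmx1.
  rewrite -(mulmxA Q) mulmx_diag; congr (_ *m diag_mx _ *m _).
  by apply/rowP => k; rewrite !mxE; case: (k < K)%N; rewrite ?mulr1 ?mulr0.
rewrite inner_tr PT PP hP mxtrace_mulC mulmxA hQ1 mul1mx mxtrace_diag.
have -> : (d%:R : R) = \sum_(k < d) 1 by rewrite sumr_const card_ord.
apply: ler_sum => k _; rewrite mxE.
by case: (k < K)%N.
Qed.

Lemma frob_scale d (a : R) (V : 'M[R]_d) : 0 <= a -> inner V V <= d%:R ->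
  frob (a *: V) <= a * Num.sqrt d%:R.
Proof.
move=> a0 hV; rewrite frobE; apply: sqrt_le_of; first by rewrite mulr_ge0 ?sqrtr_ge0.
have -> : inner (a *: V) (a *: V) = a ^+ 2 * inner V V.
  rewrite /inner mulr_sumr; apply: eq_bigr => i _; rewrite mulr_sumr.
  by apply: eq_bigr => j _; rewrite !mxE; ring.
rewrite exprMn sqr_sqrtr ?ler0n //; apply: ler_wpM2l => //; exact: sqr_ge0.
Qed.
End S.

Theorem lemmaA1 (R : realType) (J d : nat) (K : nat -> nat)
    (U : nat -> 'M[R]_d) :
  (forall j : nat, (1 <= j <= J)%N -> orth_proj (U j) /\ \rank (U j) = K j) ->
  exists C : R, 0 < C /\
    forall (alpha : R) (Uh Ub : nat -> 'M[R]_d),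
      0 <= alpha -> alpha < 1 / (4 * Num.sqrt 2 + 2) ->
      (forall j : nat, (1 <= j <= J)%N ->
         orth_proj (Uh j) /\ \rank (Uh j) = K j) ->
      is_fixed_point J K alpha Uh Ub ->
      \sum_(1 <= j < J.+1) frob (Ub j - U j)
        <= C * (\sum_(1 <= j < J.+1) frob (Uh j - U j) + alpha).
Proof.
move=> hU; set c := Num.sqrt (d%:R : R).
have c0 : 0 <= c by apply: sqrtr_ge0.
have cJ : 0 <= 8 * c * J%:R by rewrite !mulr_ge0 ?ler0n.
exists (4 + 8 * c * J%:R); split; first by lra.
move=> alpha Uh Ub a0 _ hUh hfix.
have hch : forall j', inner (chain_at J Ub j') (chain_at J Ub j') <= d%:R.
  move=> j'; rewrite /chain_at; case: ifP => h'; first exact: PiK_inner (hfix j' h').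
  rewrite /inner big1 ?ler0n // => i _; rewrite big1 // => k _; by rewrite !mxE mul0r.
have step : forall j, (1 <= j < J.+1)%N ->
    frob (Ub j - U j) <= 4 * frob (Uh j - U j) + 8 * c * alpha.
  move=> j hj; have [[hUT hUU] hr] := hU j hj.
  have hK : (K j <= d)%N by rewrite -hr rank_leq_row.
  have trU : \tr (U j) = (K j)%:R by rewrite tr_idem_rank // hr.
  have := dk hUT hUU trU hK (hfix j hj).
  set M := _ + _ + _ => h.
  have f1 : frob (Ub j - U j) <= 2 * frob (M - U j).
    rewrite !frobE; apply: sqrt_le_of; first by rewrite mulr_ge0 ?sqrtr_ge0.
    by rewrite exprMn sqr_sqrtr ?inner_ge0 // expr2; lra.
  have eM : M - U j = (Uh j - U j) + alpha *: chain_at J Ub j.-1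
                      + alpha *: chain_at J Ub j.+1.
    by rewrite /M; apply/matrixP => a b; rewrite !mxE; lra.
  have := frob3 (Uh j - U j) (alpha *: chain_at J Ub j.-1) (alpha *: chain_at J Ub j.+1).
  have := frob_scale a0 (hch j.-1); have := frob_scale a0 (hch j.+1).
  rewrite -eM -/c; nra.
apply: le_trans (ler_sum_nat step) _.
rewrite big_split /= -mulr_sumr sumr_const_nat subn1 /= -mulr_natr.
have e0 : 0 <= \sum_(1 <= j < J.+1) frob (Uh j - U j).
  by apply: sumr_ge0 => i _; rewrite frobE sqrtr_ge0.
move: e0; set e := \sum_(1 <= j < J.+1) _ => e0.
nra.
Qed.
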